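(* Let $\mathcal{B}$ be a real uniform Banach space, $\Omega:\mathcal{B}\to\mathbb{R}$ admissible, $m\in\mathbb{N}$ and $(x_i,y_i)_{i=1}^m\subset\mathcal{B}\times\mathbb{R}$ data for which the constraints $[f,x_i]=y_i$ ($i=1,\dots,m$) can be satisfied. Then there is exactly one solution $f_0$ of the regularised interpolation problem $\min\{\Omega(f): [f,x_i]=y_i\ \forall i\}$ with $f_0^*\in\operatorname{span}\{x_1^*,\dots,x_m^*\}$, and this $f_0$ is the unique minimiser of $\|f\|$ subject to $[f,x_i]=y_i$ for all $i$; in particular it does not depend on the admissible regulariser $\Omega$.
   Context: A real Banach space $\mathcal{B}$ is called uniform if it is uniformly convex and uniformly smooth (equivalently, its norm is uniformly Fréchet differentiable). On such a space there is a unique semi-inner product inducing the norm, i.e. a unique map $[\cdot,\cdot]:\mathcal{B}\times\mathcal{B}\to\mathbb{R}$ that is linear in the first argument, satisfies $[x,x]=\|x\|^2$, $|[x,y]|^2\le[x,x][y,y]$ and $[x,\lambda y]=\lambda[x,y]$ for $\lambda\in\mathbb{R}$; it is given by $[y,x]=\|x\|\lim_{t\to0}\frac{\|x+ty\|-\|x\|}{t}$ for $x\neq0$ (and $[y,0]=0$). The duality map $x\mapsto x^*$, $x^*(y)=[y,x]$, is a (nonlinear in general, but positively and negatively homogeneous) isometric bijection $\mathcal{B}\to\mathcal{B}^*$. Given $m\in\mathbb{N}$ and data $(x_i,y_i)\in\mathcal{B}\times\mathbb{R}$, $i=1,\dots,m$, the regularised interpolation problem is $\min\{\Omega(f): f\in\mathcal{B},\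 [f,x_i]=y_i\ \forall i=1,\dots,m\}$. A function $\Omega:\mathcal{B}\to\mathbb{R}$ is called admissible if for every $m\in\mathbb{N}$ and every data $(x_i,y_i)_{i=1}^m\subset\mathcal{B}\times\mathbb{R}$ for which the constraints $[f,x_i]=y_i$ can be satisfied, the regularised interpolation problem has a minimiser $f_0$ whose dual element satisfies $f_0^*=\sum_{i=1}^m c_i x_i^*$ for some $c_i\in\mathbb{R}$. *)

(* Defs.v *)
From Stdlib Require Import Reals Lra ClassicalEpsilon.
Open Scope R_scope.

Record NormedSpace := {
  carrier :> Type;
  vadd : carrier -> carrier -> carrier;
  vscal : R -> carrier -> carrier;
  vzero : carrier;
  vopp : carrier -> carrier;
  vnorm : carrier -> R;
  vadd_assoc : forall u v w, vadd u (vadd v w) = vadd (vadd u v) w;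
  vadd_comm : forall u v, vadd u v = vadd v u;
  vadd_0 : forall u, vadd u vzero = u;
  vadd_opp : forall u, vadd u (vopp u) = vzero;
  vscal_1 : forall u, vscal 1 u = u;
  vscal_assoc : forall a b u, vscal a (vscal b u) = vscal (a * b) u;
  vscal_distr_l : forall a u v, vscal a (vadd u v) = vadd (vscal a u) (vscal a v);
  vscal_distr_r : forall a b u, vscal (a + b) u = vadd (vscal a u) (vscal b u);
  vnorm_eq0 : forall u, vnorm u = 0 -> u = vzero;
  vnorm_homog : forall a u, vnorm (vscal a u) = Rabs a * vnorm u;
  vnorm_triangle : forall u v, vnorm (vadd u v) <= vnorm u + vnorm v
}.

Arguments vadd {n}. Arguments vscal {n}. Arguments vzero {n}.
Arguments vopp {n}. Arguments vnorm {n}.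

Definition vsub {B : NormedSpace} (u v : B) : B := vadd u (vopp v).

Definition complete (B : NormedSpace) : Prop :=
  forall u : nat -> B,
    (forall eps, eps > 0 -> exists N, forall n p, (n >= N)%nat -> (p >= N)%nat ->
        vnorm (vsub (u n) (u p)) < eps) ->
    exists l : B, forall eps, eps > 0 -> exists N, forall n, (n >= N)%nat ->
        vnorm (vsub (u n) l) < eps.

Definition uniformly_convex (B : NormedSpace) : Prop :=
  forall eps, 0 < eps <= 2 -> exists delta, delta > 0 /\
    forall x y : B, vnorm x <= 1 -> vnorm y <= 1 -> vnorm (vsub x y) >= eps ->
      vnorm (vscal (1/2) (vadd x y)) <= 1 - delta.

Definition uniformly_smooth (B : NormedSpace) : Prop :=
  exists D : B -> B -> R, forall eps, eps > 0 -> exists delta, delta > 0 /\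
    forall (x y : B) (t : R), vnorm x = 1 -> vnorm y = 1 -> 0 < Rabs t < delta ->
      Rabs ((vnorm (vadd x (vscal t y)) - vnorm x) / t - D x y) < eps.

Definition uniform (B : NormedSpace) : Prop :=
  complete B /\ uniformly_convex B /\ uniformly_smooth B.

(** The semi-inner product [y, x] = ||x|| lim_{t->0} (||x+ty||-||x||)/t
    (and [y, 0] = 0); the limit is the derivative at 0 of t |-> ||x+ty||. *)
Definition sip {B : NormedSpace} (y x : B) : R :=
  vnorm x * epsilon (inhabits 0)
    (fun l => derivable_pt_lim (fun t => vnorm (vadd x (vscal t y))) 0 l).

Definition dual {B : NormedSpace} (x : B) : B -> R := fun y => sip y x.

Fixpoint rsum (n : nat) (f : nat -> R) : R :=
  match n with O => 0 | S k => rsum k f + f k end.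

Definition interp_constr {B : NormedSpace} (m : nat) (x : nat -> B) (y : nat -> R)
  (f : B) : Prop := forall i, (i < m)%nat -> sip f (x i) = y i.

Definition dual_in_span {B : NormedSpace} (m : nat) (x : nat -> B) (f : B) : Prop :=
  exists c : nat -> R, forall z : B, dual f z = rsum m (fun i => c i * dual (x i) z).

Definition is_minimiser {B : NormedSpace} (F : B -> R) (P : B -> Prop) (f : B) : Prop :=
  P f /\ forall g, P g -> F f <= F g.

Definition admissible (B : NormedSpace) (Omega : B -> R) : Prop :=
  forall (m : nat) (x : nat -> B) (y : nat -> R),
    (exists f, interp_constr m x y f) ->
    exists f0, is_minimiser Omega (interp_constr m x y) f0 /\ dual_in_span m x f0.

(* Main.v *)
Require Import Defs.
From Stdlib Require Import Reals Lra Psatz ClassicalEpsilon.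
Open Scope R_scope.

Section S.
Variable B : NormedSpace.

Lemma L1 (w : B) : vadd w w = w -> w = vzero.
Proof.
  intro H.
  assert (E: vadd (vadd w w) (vopp w) = vadd w (vopp w)) by now rewrite H.
  rewrite <- vadd_assoc, vadd_opp, vadd_0 in E. exact E.
Qed.

Lemma scal0 (u : B) : vscal 0 u = vzero.
Proof. apply L1. rewrite <- vscal_distr_r, Rplus_0_l. reflexivity. Qed.

Lemma scal_zero a : vscal a (@vzero B) = vzero.
Proof. apply L1. rewrite <- vscal_distr_l, vadd_0. reflexivity. Qed.

Lemma norm0 : vnorm (@vzero B) = 0.
Proof. rewrite <- (scal0 vzero), vnorm_homog, Rabs_R0. ring. Qed.

Lemma opp_scal (u : B) : vopp u = vscal (-1) u.
Proof.
  assert (E: vadd (vscal (-1) u) u = vzero).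
  { rewrite <- (vscal_1 B u) at 2. rewrite <- vscal_distr_r.
    replace (-1+1) with 0 by ring. apply scal0. }
  rewrite <- (vadd_0 B (vscal (-1) u)), <- (vadd_opp B u), vadd_assoc, E,
    vadd_comm, vadd_0. reflexivity.
Qed.

Lemma norm_nonneg (u : B) : 0 <= vnorm u.
Proof.
  assert (H := vnorm_triangle B u (vopp u)).
  rewrite vadd_opp, norm0, opp_scal, vnorm_homog in H.
  replace (Rabs (-1)) with 1 in H. lra.
  unfold Rabs; destruct (Rcase_abs (-1)); lra.
Qed.

Lemma add0_sub (u v : B) : vadd u (vopp v) = vzero -> u = v.
Proof.
  intro H.
  rewrite <- (vadd_0 B u), <- (vadd_opp B v), (vadd_comm B v (vopp v)), vadd_assoc, H,
    vadd_comm, vadd_0. reflexivity.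
Qed.

Lemma alg_a (x y : B) s :
  vadd x (vscal s y) = vadd (vscal (1-s) x) (vscal s (vadd x y)).
Proof.
  rewrite vscal_distr_l, vadd_assoc, <- vscal_distr_r.
  replace (1-s+s) with 1 by ring. rewrite vscal_1. reflexivity.
Qed.

Lemma alg_c (x : B) t : vadd x (vscal t x) = vscal (1+t) x.
Proof. rewrite vscal_distr_r, vscal_1. reflexivity. Qed.

Lemma lim_le (F : R -> R) l M : derivable_pt_lim F 0 l ->
  (forall h, 0 < h <= 1 -> (F h - F 0) / h <= M) -> l <= M.
Proof.
  intros HD HM. destruct (Rle_dec l M) as [|n]; auto. exfalso.
  destruct (HD (l - M)) as [d Hd]; [lra|].
  set (h := Rmin (d/2) 1).
  assert (Hd2 : 0 < d) by apply cond_pos.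
  assert (h0 : 0 < h) by (unfold h; apply Rmin_glb_lt; lra).
  assert (h1 : h <= 1) by (unfold h; apply Rmin_r).
  assert (h2 : h <= d/2) by (unfold h; apply Rmin_l).
  specialize (Hd h ltac:(lra)). rewrite Rabs_pos_eq in Hd by lra.
  specialize (Hd ltac:(lra)). rewrite Rplus_0_l in Hd.
  specialize (HM h ltac:(lra)).
  apply Rabs_def2 in Hd. lra.
Qed.

Definition US := uniformly_smooth B.

Lemma deriv_exists (HS : US) (x y : B) : 0 < vnorm x ->
  exists l, derivable_pt_lim (fun t => vnorm (vadd x (vscal t y))) 0 l.
Proof.
  intro Hx.
  destruct (Req_dec (vnorm y) 0) as [Hy|Hy].
  { apply vnorm_eq0 in Hy. subst y. exists 0.
    intros eps He. exists (mkposreal 1 Rlt_0_1). intros h Hh _.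
    rewrite !scal_zero.
    replace ((vnorm (vadd x vzero) - vnorm (vadd x vzero)) / h - 0) with 0
      by (field; auto).
    rewrite Rabs_R0; lra. }
  assert (Hy' : 0 < vnorm y) by (generalize (norm_nonneg y); lra).
  destruct HS as [D HD].
  set (u := vscal (1 / vnorm x) x). set (v := vscal (1 / vnorm y) y).
  set (k := vnorm y / vnorm x).
  assert (Hk : 0 < k) by (apply Rdiv_lt_0_compat; auto).
  assert (Nu : vnorm u = 1).
  { unfold u. rewrite vnorm_homog, Rabs_pos_eq. field; lra.
    left; apply Rdiv_lt_0_compat; lra. }
  assert (Nv : vnorm v = 1).
  { unfold v. rewrite vnorm_homog, Rabs_pos_eq. field; lra.
    left; apply Rdiv_lt_0_compat; lra. }
  assert (key : forall t, vnorm (vadd x (vscal t y)) =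
     vnorm x * vnorm (vadd u (vscal (t*k) v))).
  { intro t. rewrite <- (Rabs_pos_eq (vnorm x)) at 1 by lra.
    rewrite <- vnorm_homog. f_equal. unfold u, v.
    rewrite vscal_distr_l, !vscal_assoc.
    replace (vnorm x * (1 / vnorm x)) with 1 by (field; lra).
    replace (vnorm x * (t * k) * (1 / vnorm y)) with t by (unfold k; field; lra).
    rewrite vscal_1. reflexivity. }
  exists (vnorm y * D u v).
  intros eps He.
  destruct (HD (eps / vnorm y)) as [d [Hd HD']].
  { apply Rdiv_lt_0_compat; auto. }
  assert (Hdk : 0 < d / k) by (apply Rdiv_lt_0_compat; auto).
  exists (mkposreal (d/k) Hdk). intros h Hh Hhd. simpl in Hhd.
  rewrite Rplus_0_l, scal0, vadd_0, key.
  assert (R1 : 0 < Rabs (h*k) < d).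
  { rewrite Rabs_mult, (Rabs_pos_eq k) by lra. split.
    apply Rmult_lt_0_compat; auto. apply Rabs_pos_lt; auto.
    assert (Rabs h * k < d / k * k) by (apply Rmult_lt_compat_r; auto).
    replace (d/k*k) with d in H by (field; lra). exact H. }
  specialize (HD' u v (h*k) Nu Nv R1). rewrite Nu in HD'.
  set (Q := vnorm (vadd u (vscal (h * k) v))) in *.
  replace ((vnorm x * Q - vnorm x) / h - vnorm y * D u v) with
    (vnorm y * ((Q - 1) / (h * k) - D u v)) by (unfold k; field; lra).
  rewrite Rabs_mult, (Rabs_pos_eq (vnorm y)) by lra.
  replace eps with (vnorm y * (eps / vnorm y)) by (field; lra).
  apply Rmult_lt_compat_l; auto.
Qed.

Lemma sip_deriv (HS : US) (x y : B) : 0 < vnorm x ->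
  derivable_pt_lim (fun t => vnorm (vadd x (vscal t y))) 0
    (epsilon (inhabits 0)
      (fun l => derivable_pt_lim (fun t => vnorm (vadd x (vscal t y))) 0 l)).
Proof. intro Hx. apply epsilon_spec. apply deriv_exists; auto. Qed.

Lemma sip_le (HS : US) (x y : B) : sip y x <= vnorm x * vnorm y.
Proof.
  destruct (Req_dec (vnorm x) 0) as [H0|H0].
  { unfold sip. rewrite H0. lra. }
  assert (Hx : 0 < vnorm x) by (generalize (norm_nonneg x); lra).
  unfold sip. apply Rmult_le_compat_l; [lra|].
  eapply lim_le. apply sip_deriv; auto.
  intros h Hh. cbv beta. rewrite scal0, vadd_0.
  assert (T := vnorm_triangle B x (vscal h y)). rewrite vnorm_homog, Rabs_pos_eq in T by lra.
  apply (Rmult_le_reg_r h); [lra|].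
  replace ((vnorm (vadd x (vscal h y)) - vnorm x) / h * h) with
    (vnorm (vadd x (vscal h y)) - vnorm x) by (field; lra). lra.
Qed.

Lemma sip_self (HS : US) (x : B) : sip x x = vnorm x * vnorm x.
Proof.
  destruct (Req_dec (vnorm x) 0) as [H0|H0].
  { unfold sip. rewrite H0. lra. }
  assert (Hx : 0 < vnorm x) by (generalize (norm_nonneg x); lra).
  unfold sip. f_equal.
  eapply uniqueness_limite. apply sip_deriv; auto.
  intros eps He. exists (mkposreal 1 Rlt_0_1). intros h Hh Hd. simpl in Hd.
  rewrite Rplus_0_l, !alg_c, !vnorm_homog.
  apply Rabs_def2 in Hd.
  rewrite (Rabs_pos_eq (1+h)) by lra. rewrite (Rabs_pos_eq (1+0)) by lra.
  replace (((1 + h) * vnorm x - (1 + 0) * vnorm x) / h - vnorm x) with 0 by (field; auto).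
  rewrite Rabs_R0; lra.
Qed.

Lemma rsum_ext n f g : (forall i, (i < n)%nat -> f i = g i) -> rsum n f = rsum n g.
Proof.
  induction n; simpl; intros H; auto.
  rewrite IHn by (intros; apply H; lia). rewrite H by lia. reflexivity.
Qed.

Lemma lemA (HS : US) m x y (f g : B) : interp_constr m x y f -> dual_in_span m x f ->
  interp_constr m x y g -> sip g f = vnorm f * vnorm f.
Proof.
  intros Hf [c Hc] Hg.
  assert (E1 := Hc f). assert (E2 := Hc g). unfold dual in E1, E2.
  rewrite sip_self in E1 by auto. rewrite E2, E1. apply rsum_ext.
  intros i Hi. rewrite Hf, Hg by auto. reflexivity.
Qed.

Lemma lemA' (HS : US) m x y (f g : B) : interp_constr m x y f -> dual_in_span m x f ->
  interp_constr m x y g -> vnorm f <= vnorm g.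
Proof.
  intros Hf Hs Hg. assert (E := lemA HS m x y f g Hf Hs Hg).
  assert (L := sip_le HS f g). rewrite E in L.
  destruct (Req_dec (vnorm f) 0) as [H0|H0].
  { rewrite H0; apply norm_nonneg. }
  assert (Hx : 0 < vnorm f) by (generalize (norm_nonneg f); lra).
  apply (Rmult_le_reg_l (vnorm f)); auto.
Qed.

Lemma lemB (HB : uniform B) m x y (f g : B) : interp_constr m x y f -> dual_in_span m x f ->
  interp_constr m x y g -> vnorm g <= vnorm f -> g = f.
Proof.
  intros Hf Hs Hg Hle.
  destruct HB as [_ [UC HS]].
  assert (E := lemA HS m x y f g Hf Hs Hg).
  assert (L := lemA' HS m x y f g Hf Hs Hg).
  set (r := vnorm f) in *.
  assert (Hgr : vnorm g = r) by lra.
  destruct (Req_dec r 0) as [H0|H0].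
  { rewrite (vnorm_eq0 B g) by lra. rewrite (vnorm_eq0 B f) by auto. reflexivity. }
  assert (Hr0 : 0 <= r) by apply norm_nonneg. assert (Hr : 0 < r) by lra.
  unfold sip in E. fold r in E.
  set (l := epsilon _ _) in E.
  assert (Hl : l = r) by (apply (Rmult_eq_reg_l r); auto).
  assert (HD := sip_deriv HS f g Hr). fold l in HD.
  assert (Hc : l <= vnorm (vadd f g) - r).
  { eapply lim_le. exact HD. intros h Hh. cbv beta. rewrite scal0, vadd_0.
    rewrite alg_a. fold r.
    assert (T := vnorm_triangle B (vscal (1-h) f) (vscal h (vadd f g))).
    rewrite !vnorm_homog, Rabs_pos_eq, (Rabs_pos_eq h) in T by lra. fold r in T.
    apply (Rmult_le_reg_r h); [lra|].
    set (N := vnorm (vadd (vscal (1 - h) f) (vscal h (vadd f g)))) in *.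
    replace ((N - r) / h * h) with (N - r) by (field; lra). nra. }
  set (u := vscal (1/r) f). set (v := vscal (1/r) g).
  assert (Nu : vnorm u = 1).
  { unfold u. rewrite vnorm_homog, Rabs_pos_eq. fold r. field; lra.
    left; apply Rdiv_lt_0_compat; lra. }
  assert (Nv : vnorm v = 1).
  { unfold v. rewrite vnorm_homog, Rabs_pos_eq, Hgr. field; lra.
    left; apply Rdiv_lt_0_compat; lra. }
  assert (Hm : 1 <= vnorm (vscal (1/2) (vadd u v))).
  { unfold u, v. rewrite <- vscal_distr_l, vscal_assoc, vnorm_homog, Rabs_pos_eq.
    apply (Rmult_le_reg_l (2*r)); [lra|].
    replace (2 * r * (1 / 2 * (1 / r) * vnorm (vadd f g))) with (vnorm (vadd f g))
      by (field; lra). lra.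
    left. apply Rmult_lt_0_compat; [lra|apply Rdiv_lt_0_compat; lra]. }
  assert (Huv : u = v).
  { destruct (Req_dec (vnorm (vsub u v)) 0) as [Z|Z].
    { apply add0_sub. apply vnorm_eq0. exact Z. }
    assert (Hp : 0 < vnorm (vsub u v)) by (generalize (norm_nonneg (vsub u v)); lra).
    destruct (UC (Rmin (vnorm (vsub u v)) 2)) as [d [Hd Hd']].
    { split. apply Rmin_glb_lt; lra. apply Rmin_r. }
    specialize (Hd' u v ltac:(lra) ltac:(lra) (Rle_ge _ _ (Rmin_l _ _))). lra. }
  assert (Ef : f = vscal r u).
  { unfold u. rewrite vscal_assoc. replace (r * (1/r)) with 1 by (field; lra).
    rewrite vscal_1; reflexivity. }
  assert (Eg : g = vscal r v).
  { unfold v. rewrite vscal_assoc. replace (r * (1/r)) with 1 by (field; lra).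
    rewrite vscal_1; reflexivity. }
  rewrite Eg, Ef, Huv. reflexivity.
Qed.

End S.

Theorem mainTheorem5 (B : NormedSpace) (HB : uniform B) (Omega : B -> R)
  (HO : admissible B Omega) (m : nat) (x : nat -> B) (y : nat -> R)
  (Hfeas : exists f, interp_constr m x y f) :
  exists f0 : B,
    (is_minimiser Omega (interp_constr m x y) f0 /\ dual_in_span m x f0) /\
    (forall g : B, is_minimiser Omega (interp_constr m x y) g /\ dual_in_span m x g ->
       g = f0) /\
    is_minimiser vnorm (interp_constr m x y) f0 /\
    (forall g : B, is_minimiser vnorm (interp_constr m x y) g -> g = f0).
Proof.
  destruct (HO m x y Hfeas) as [f0 [[Hf0 Hmin] Hspan]].
  assert (HS : US B) by (destruct HB as [_ [_ H]]; exact H).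
  exists f0. split; [split; [split; auto | auto]|].
  split.
  { intros g [[Hg _] Hgs]. symmetry.
    apply (lemB B HB m x y g f0 Hg Hgs Hf0).
    apply (lemA' B HS m x y f0 g Hf0 Hspan Hg). }
  split.
  { split; auto. intros g Hg. apply (lemA' B HS m x y f0 g Hf0 Hspan Hg). }
  intros g [Hg Hgm].
  apply (lemB B HB m x y f0 g Hf0 Hspan Hg). apply Hgm; auto.
Qed.
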